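(* Let $V=\bigoplus_{n\in\mathbb{Z}}V_n$ be an $\mathcal{H}$-module vertex algebra such that $V_n=0$ for $n<0$ and $V_0=\mathbb{F}\mathbf{1}$, and let $J$ be the sum of all proper graded $V$-submodules of $V$ (the maximal proper graded $V$-submodule of $V$). Then $J$ is an ideal of $V$. If in addition $L_1^{(n)}V_n=0$ for all $n\ge1$, then $J$ is also an $\mathcal{H}$-submodule of $V$.
   Context: Throughout, $\mathbb{F}$ is an algebraically closed field of odd prime characteristic $p$; vertex algebras are over $\mathbb{F}$. Every vertex algebra $V$ is a module for the bialgebra $\mathcal{B}$ with basis $\{\mathcal{D}^{(n)}\}_{n\in\mathbb{N}}$, $\mathcal{D}^{(m)}\mathcal{D}^{(n)}=\binom{m+n}{n}\mathcal{D}^{(m+n)}$, via $\mathcal{D}^{(n)}v=v_{-n-1}\mathbf{1}$. $\mathcal{H}$: let $\mathfrak{sl}_2$ over $\mathbb{C}$ have basis $L_{-1},L_0,L_1$ with $[L_1,L_{-1}]=2L_0$, $[L_0,L_{\pm1}]=\mp L_{\pm1}$; put $L_{\pm1}^{(n)}=L_{\pm1}^n/n!$, $L_0^{(n)}=\binom{-2L_0}{n}$ in $U(\mathfrak{sl}_2)$; $U(\mathfrak{sl}_2)_{\mathbb{Z}}$ is the $\mathbb{Z}$-span of the $L_{-1}^{(i)}L_0^{(j)}L_1^{(k)}$, and $\mathcal{H}=\mathbb{F}\otimes_{\mathbb{Z}}U(\mathfrak{sl}_2)_{\mathbb{Z}}$. $e^{zL_{\pm1}}=\sum_{n\ge0}z^nL_{\pm1}^{(n)}$.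 For $v$ homogeneous of degree $n$, $f(z)^{\deg}v:=f(z)^nv$, extended linearly. A $\mathbb{Z}$-graded vertex algebra: $V=\bigoplus V_n$, $\mathbf{1}\in V_0$, $u_rV_n\subset V_{m+n-r-1}$ for $u\in V_m$; a graded $V$-submodule of $V$ is a subspace $U=\bigoplus(U\cap V_n)$ with $u_rU\subset U$ for all $u\in V$. A $\mathbb{Z}$-graded weight $\mathcal{H}$-module: $W=\bigoplus W_n$ with $\mathcal{H}$-action, $L_{\pm1}^{(r)}W_n\subset W_{n\mp r}$, $L_0^{(r)}|_{W_n}=\binom{-2n}{r}$. An $\mathcal{H}$-module vertex algebra: a $\mathbb{Z}$-graded vertex algebra $V$ which is a $\mathbb{Z}$-graded weight $\mathcal{H}$-module with $L_{-1}^{(n)}=\mathcal{D}^{(n)}$, such that $V_n=0$ for $n\ll0$, $L_1^{(n)}\mathbf{1}=\delta_{n,0}\mathbf{1}$, and $e^{zL_1}Y(v,z_0)e^{-zL_1}=Y\bigl(e^{z(1-zz_0)L_1}(1-zz_0)^{-2\deg}v,z_0/(1-zz_0)\bigr)$ for $v\in V$. *)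

(* Defs.v *)
From HB Require Import structures.
From mathcomp Require Import all_boot all_order all_algebra.
Set Implicit Arguments. Unset Strict Implicit. Unset Printing Implicit Defensive.
Import Order.TTheory GRing.Theory Num.Theory.
Local Open Scope ring_scope.

(* Generalized binomial coefficient binom(x, k) = x(x-1)...(x-k+1)/k! for x : int. *)
Definition binz (x : int) (k : nat) : int :=
  match x with
  | Posz n => ('C(n, k))%:Z
  | Negz n => (-1) ^+ k * ('C(n + k, k))%:Z   (* Negz n = -(n+1) *)
  end.

Definition lin_map (F : fieldType) (V : lmodType F) (f : V -> V) : Prop :=
  forall (a : F) (x y : V), f (a *: x + y) = a *: f x + f y.

Definition subspace (F : fieldType) (V : lmodType F) (U : V -> Prop) : Prop :=
  U 0 /\ forall (a : F) (x y : V), U x -> U y -> U (a *: x + y).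

(* A Z-grading V = (+)_n V_n, given by the family of projections pi n onto V_n;
   V_n = { v | pi n v = v }. *)
Definition is_grading (F : fieldType) (V : lmodType F) (pi : int -> V -> V) : Prop :=
  (forall n, lin_map (pi n)) /\
  (forall (n m : int) (x : V), pi n (pi m x) = if n == m then pi m x else 0) /\
  (forall x : V, exists s : seq int,
      uniq s /\ (forall n, n \notin s -> pi n x = 0) /\ x = \sum_(n <- s) pi n x).

(* Vertex algebra over F: Y u r v = u_r v. Borcherds identity with the (finite)
   sums truncated at any K beyond which all summands vanish. *)
Record vertex_algebra (F : fieldType) (V : lmodType F) (one : V)
    (Y : V -> int -> V -> V) : Prop := {
  va_lin_l : forall r v, lin_map (fun u => Y u r v);
  va_lin_r : forall u r, lin_map (Y u r);
  va_trunc : forall u v, exists N : int, forall r, N <= r -> Y u r v = 0;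
  va_vac_l : forall r v, Y one r v = if r == -1 then v else 0;
  va_create : forall u, Y u (-1) one = u;
  va_vac_r : forall u r, 0 <= r -> Y u r one = 0;
  va_borcherds : forall (u v w : V) (m n l : int) (K : nat),
    (forall i : nat, (K <= i)%N ->
       Y u (l + i%:Z) v = 0 /\ Y v (n + i%:Z) w = 0 /\ Y u (m + i%:Z) w = 0) ->
    \sum_(0 <= i < K) ((binz m i)%:~R : F) *: Y (Y u (l + i%:Z) v) (m + n - i%:Z) w =
    \sum_(0 <= i < K) ((-1) ^+ i * (binz l i)%:~R : F) *:
       (Y u (m + l - i%:Z) (Y v (n + i%:Z) w)
        - ((-1) ^+ `|l|%N : F) *: Y v (n + l - i%:Z) (Y u (m + i%:Z) w))
}.

Definition graded_VA (F : fieldType) (V : lmodType F) (one : V)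
    (Y : V -> int -> V -> V) (pi : int -> V -> V) : Prop :=
  vertex_algebra one Y /\ is_grading pi /\ pi 0 one = one /\
  forall (u v : V) (m n r : int), pi m u = u -> pi n v = v ->
    pi (m + n - r - 1) (Y u r v) = Y u r v.

(* Z-graded weight H-module structure on (V, pi): Lm1 k, L0 k, L1 k are the
   actions of L_{-1}^{(k)}, L_0^{(k)}, L_1^{(k)}, subject to the relations of
   H = F (x) U(sl_2)_Z on weight modules (with e = L_1, f = -L_{-1}, h = -2L_0). *)
Definition weight_H_module (F : fieldType) (V : lmodType F) (pi : int -> V -> V)
    (Lm1 L0 L1 : nat -> V -> V) : Prop :=
  (forall k, lin_map (Lm1 k) /\ lin_map (L0 k) /\ lin_map (L1 k)) /\
  (forall v, Lm1 0%N v = v /\ L1 0%N v = v) /\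
  (forall (a b : nat) v, Lm1 a (Lm1 b v) = ('C(a + b, a))%:R *: Lm1 (a + b)%N v) /\
  (forall (a b : nat) v, L1 a (L1 b v) = ('C(a + b, a))%:R *: L1 (a + b)%N v) /\
  (forall (n : int) (k : nat) v, pi n v = v ->
     pi (n + k%:Z) (Lm1 k v) = Lm1 k v /\ pi (n - k%:Z) (L1 k v) = L1 k v) /\
  (forall (n : int) (k : nat) v, pi n v = v -> L0 k v = (binz (-2 * n) k)%:~R *: v) /\
  (forall (n : int) (a b : nat) v, pi n v = v ->
     L1 a (Lm1 b v) =
     \sum_(0 <= t < (minn a b).+1)
        ((-1) ^+ t * (binz (-2 * n + a%:Z - b%:Z) t)%:~R : F) *: Lm1 (b - t)%N (L1 (a - t)%N v)).

(* The conjugation formula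
   e^{zL_1} Y(v,z0) e^{-zL_1} = Y(e^{z(1-z z0)L_1}(1-z z0)^{-2 deg} v, z0/(1-z z0))
   is stated coefficientwise (coefficient of z^k z0^{-r-1}) for homogeneous v of degree d. *)
Definition H_module_VA (F : fieldType) (V : lmodType F) (one : V)
    (Y : V -> int -> V -> V) (pi : int -> V -> V) (Lm1 L0 L1 : nat -> V -> V) : Prop :=
  graded_VA one Y pi /\ weight_H_module pi Lm1 L0 L1 /\
  (forall (k : nat) v, Lm1 k v = Y v (- k%:Z - 1) one) /\
  (exists N : int, forall n v, n < N -> pi n v = 0) /\
  (forall k : nat, L1 k one = if k == 0%N then one else 0) /\
  (forall (d r : int) (k : nat) (v w : V), pi d v = v ->
     \sum_(0 <= a < k.+1) ((-1) ^+ (k - a) : F) *: L1 a (Y v r (L1 (k - a)%N w)) =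
     \sum_(0 <= i < k.+1) ((-1) ^+ i * (binz (k%:Z - 2 * d + r + 1) i)%:~R : F) *:
        Y (L1 (k - i)%N v) (r + i%:Z) w).

Definition proper_graded_submodule (F : fieldType) (V : lmodType F)
    (Y : V -> int -> V -> V) (pi : int -> V -> V) (U : V -> Prop) : Prop :=
  subspace U /\ (forall n x, U x -> U (pi n x)) /\
  (forall u r x, U x -> U (Y u r x)) /\ (exists v, ~ U v).

Definition max_graded_submodule (F : fieldType) (V : lmodType F)
    (Y : V -> int -> V -> V) (pi : int -> V -> V) (v : V) : Prop :=
  exists (k : nat) (us : 'I_k -> V) (Us : 'I_k -> V -> Prop),
    (forall i, proper_graded_submodule Y pi (Us i) /\ Us i (us i)) /\
    v = \sum_(i < k) us i.

Definition VA_ideal (F : fieldType) (V : lmodType F) (Y : V -> int -> V -> V)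
    (I : V -> Prop) : Prop :=
  subspace I /\ forall u a r, I a -> I (Y u r a) /\ I (Y a r u).

Definition H_submodule (F : fieldType) (V : lmodType F) (Lm1 L0 L1 : nat -> V -> V)
    (I : V -> Prop) : Prop :=
  subspace I /\ forall (k : nat) a, I a -> I (Lm1 k a) /\ I (L0 k a) /\ I (L1 k a).

(* Main.v *)
Require Import Defs.
From HB Require Import structures.
From mathcomp Require Import all_boot all_order all_algebra zify.
Import Order.TTheory GRing.Theory Num.Theory.
Local Open Scope ring_scope.
Set Implicit Arguments. Unset Strict Implicit. Unset Printing Implicit Defensive.

Section Gen.
Variables (F : fieldType) (V : lmodType F).

Lemma lin0 (f : V -> V) : lin_map f -> f 0 = 0.
Proof.
move=> H; have := H 1 0 0; rewrite !scale1r addr0 => E.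
by apply: (addrI (f 0)); rewrite addr0 -E.
Qed.

Lemma linD (f : V -> V) x y : lin_map f -> f (x + y) = f x + f y.
Proof. by move=> H; have := H 1 x y; rewrite !scale1r. Qed.

Lemma linZ (f : V -> V) a x : lin_map f -> f (a *: x) = a *: f x.
Proof. by move=> H; have := H a x 0; rewrite addr0 (lin0 H) addr0. Qed.

Lemma linN (f : V -> V) x : lin_map f -> f (- x) = - f x.
Proof. by move=> H; rewrite -scaleN1r linZ // scaleN1r. Qed.

Lemma linB (f : V -> V) x y : lin_map f -> f (x - y) = f x - f y.
Proof. by move=> H; rewrite linD // linN. Qed.

Lemma lin_sum (f : V -> V) I (s : seq I) (P : pred I) (g : I -> V) : lin_map f ->
  f (\sum_(i <- s | P i) g i) = \sum_(i <- s | P i) f (g i).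
Proof.
move=> H; apply: (big_morph f (fun x y => linD x y H) (lin0 H)).
Qed.

Lemma lin_comp (f g : V -> V) : lin_map f -> lin_map g -> lin_map (fun x => f (g x)).
Proof. by move=> Hf Hg a x y; rewrite Hg Hf. Qed.

Lemma lin_id : lin_map (fun x : V => x).
Proof. by []. Qed.

Lemma sub0 (S : V -> Prop) : subspace S -> S 0.
Proof. by case. Qed.

Lemma subD (S : V -> Prop) x y : subspace S -> S x -> S y -> S (x + y).
Proof. by case=> _ H Hx Hy; have := H 1 x y Hx Hy; rewrite scale1r. Qed.

Lemma subZ (S : V -> Prop) a x : subspace S -> S x -> S (a *: x).
Proof. by case=> H0 H Hx; have := H a x 0 Hx H0; rewrite addr0. Qed.

Lemma subN (S : V -> Prop) x : subspace S -> S x -> S (- x).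
Proof. by move=> H Hx; rewrite -scaleN1r; apply: subZ. Qed.

Lemma subB (S : V -> Prop) x y : subspace S -> S x -> S y -> S (x - y).
Proof. by move=> H Hx Hy; apply: subD => //; apply: subN. Qed.

Lemma sub_sum (S : V -> Prop) I (s : seq I) (P : pred I) (g : I -> V) : subspace S ->
  (forall i, P i -> S (g i)) -> S (\sum_(i <- s | P i) g i).
Proof.
move=> H Hg; apply: (big_ind S (sub0 H)) => //; by move=> x y; apply: subD.
Qed.

Lemma sub_eq (S : V -> Prop) x y : S x -> x = y -> S y.
Proof. by move=> ? <-. Qed.

End Gen.
Arguments sub_sum {F V S I s P g}.
Arguments subZ {F V S} a {x}.
Arguments subD {F V S x y}.
Arguments subB {F V S x y}.
Arguments subN {F V S x}.
Arguments sub0 {F V S}.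

Section VA.
Variables (F : fieldType) (V : lmodType F) (one : V)
  (Y : V -> int -> V -> V) (pi : int -> V -> V) (Lm1 L0 L1 : nat -> V -> V).
Hypothesis HV : H_module_VA one Y pi Lm1 L0 L1.
Hypothesis Hneg : forall (n : int) (v : V), n < 0 -> pi n v = 0.
Hypothesis H0 : forall v : V, pi 0 v = v -> exists c : F, v = c *: one.

Lemma VAax : vertex_algebra one Y. Proof. by case: HV => [[]]. Qed.
Lemma Grad : is_grading pi. Proof. by case: HV => [[_ []]]. Qed.
Lemma pi_lin n : lin_map (pi n). Proof. by case: Grad => H _; apply: H. Qed.
Lemma pi_pi n m x : pi n (pi m x) = if n == m then pi m x else 0.
Proof. by case: Grad => _ [H _]; apply: H. Qed.
Lemma pi_homog k n x : pi k x = x -> pi n x = if n == k then x else 0.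
Proof. by move=> <-; rewrite pi_pi. Qed.
Lemma pi_idem n x : pi n (pi n x) = pi n x.
Proof. by rewrite pi_pi eqxx. Qed.
Lemma Y_deg u v m n r : pi m u = u -> pi n v = v ->
    pi (m + n - r - 1) (Y u r v) = Y u r v.
Proof. by case: HV => [[_ [_ [_ H]]] _]; apply: H. Qed.
Lemma Yl_lin r v : lin_map (fun u => Y u r v). Proof. exact: (va_lin_l VAax). Qed.
Lemma Yr_lin u r : lin_map (Y u r). Proof. exact: (va_lin_r VAax). Qed.
Lemma Y0r u r : Y u r 0 = 0. Proof. exact: (lin0 (Yr_lin u r)). Qed.
Lemma Y0l v r : Y 0 r v = 0. Proof. exact: (lin0 (Yl_lin r v)). Qed.
Lemma Ycreate u : Y u (-1) one = u. Proof. exact: (va_create VAax). Qed.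
Lemma Yvac u (r : int) : 0 <= r -> Y u r one = 0. Proof. exact: (va_vac_r VAax). Qed.
Lemma WH : weight_H_module pi Lm1 L0 L1. Proof. by case: HV => _ []. Qed.
Lemma L1_lin k : lin_map (L1 k). Proof. by case: WH => H _; case: (H k) => _ []. Qed.
Lemma L0_lin k : lin_map (L0 k). Proof. by case: WH => H _; case: (H k) => _ []. Qed.
Lemma L1_0 v : L1 0 v = v. Proof. by case: WH => _ [H _]; case: (H v). Qed.
Lemma L1_L1 a b v : L1 a (L1 b v) = ('C(a + b, a))%:R *: L1 (a + b)%N v.
Proof. by case: WH => _ [_ [_ [H _]]]. Qed.
Lemma L1_deg n k v : pi n v = v -> pi (n - k%:Z) (L1 k v) = L1 k v.
Proof. by case: WH => _ [_ [_ [_ [H _]]]] Hv; case: (H n k v Hv). Qed.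
Lemma L0_hom n k v : pi n v = v -> L0 k v = (binz (-2 * n) k)%:~R *: v.
Proof. by case: WH => _ [_ [_ [_ [_ [H _]]]]]; apply: H. Qed.
Lemma Lm1E k v : Lm1 k v = Y v (- k%:Z - 1) one.
Proof. by case: HV => _ [_ [H _]]. Qed.
Lemma conjF (d r : int) (k : nat) (v w : V) : pi d v = v ->
     \sum_(0 <= a < k.+1) ((-1) ^+ (k - a) : F) *: L1 a (Y v r (L1 (k - a)%N w)) =
     \sum_(0 <= i < k.+1) ((-1) ^+ i * (binz (k%:Z - 2 * d + r + 1) i)%:~R : F) *:
        Y (L1 (k - i)%N v) (r + i%:Z) w.
Proof. by case: HV => _ [_ [_ [_ [_ H]]]]; apply: H. Qed.

Lemma decomp (f : V -> V) (S : V -> Prop) x : lin_map f -> subspace S ->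
  (forall n, S (f (pi n x))) -> S (f x).
Proof.
move=> Hf HS Hn; case: Grad => _ [_ /(_ x) [s [_ [_ ->]]]].
rewrite lin_sum //; exact: sub_sum.
Qed.

Lemma trunc u v (r0 : int) : exists K : nat, forall i : nat, (K <= i)%N -> Y u (r0 + i%:Z) v = 0.
Proof.
case: (va_trunc VAax u v) => N HN; exists `|N - r0|%N => i Hi; apply: HN; lia.
Qed.


Definition good (U : V -> Prop) : Prop :=
  subspace U /\ (forall n x, U x -> U (pi n x)) /\
  (forall u r x, U x -> U (Y u r x)) /\ (forall x, U x -> pi 0 x = 0).

Lemma proper_good U : proper_graded_submodule Y pi U -> good U.
Proof.
case=> HS [Hpi [HY [v Hv]]]; split=> //; split=> //; split=> // x Ux.
have U0 := Hpi 0 x Ux.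
case: (H0 (pi_idem 0 x)) => c Ec.
have [c0|cn0] := eqVneq c 0; first by rewrite Ec c0 scale0r.
exfalso; apply: Hv; rewrite -(Ycreate v); apply: HY.
have -> : one = c^-1 *: pi 0 x by rewrite Ec scalerA mulVf // scale1r.
exact: subZ.
Qed.

Lemma good_proper U : one != 0 -> good U -> proper_graded_submodule Y pi U.
Proof.
move=> Hone [HS [Hpi [HY H0']]]; split=> //; split=> //; split=> //.
exists one => Uo; move: (H0' _ Uo).
by case: HV => [[_ [_ [-> _]]] _] /eqP; rewrite (negbTE Hone).
Qed.

Lemma good_zero : good (fun x => x = 0).
Proof.
split; first by split=> // a x y -> ->; rewrite scaler0 addr0.
split; first by move=> n x ->; exact: (lin0 (pi_lin n)).
split; first by move=> u r x ->; exact: Y0r.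
by move=> x ->; exact: (lin0 (pi_lin 0)).
Qed.

Lemma good_sum U1 U2 : good U1 -> good U2 ->
  good (fun x => exists y z, U1 y /\ U2 z /\ x = y + z).
Proof.
move=> [S1 [P1 [Y1 Z1]]] [S2 [P2 [Y2 Z2]]]; split.
  split; first by exists 0, 0; rewrite addr0; split; [exact: sub0|split; [exact: sub0|]].
  move=> a x y [x1 [x2 [h1 [h2 ->]]]] [y1 [y2 [k1 [k2 ->]]]].
  exists (a *: x1 + y1), (a *: x2 + y2); split; first by case: S1 => _; apply.
  split; first by case: S2 => _; apply.
  by rewrite scalerDr addrACA.
split; first move=> n x [y [z [h1 [h2 ->]]]].
  by exists (pi n y), (pi n z); split; [exact: P1|split; [exact: P2|exact: linD (pi_lin n)]].
split; first move=> u r x [y [z [h1 [h2 ->]]]].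
  by exists (Y u r y), (Y u r z); split; [exact: Y1|split; [exact: Y2|exact: linD (Yr_lin u r)]].
move=> x [y [z [h1 [h2 ->]]]].
by rewrite (linD _ _ (pi_lin 0)) Z1 // Z2 // addr0.
Qed.

Definition Jg x := exists U, good U /\ U x.

Lemma all_zero : one = 0 -> forall v : V, v = 0.
Proof. by move=> E v; rewrite -(Ycreate v) E Y0r. Qed.

Lemma J_Jg x : max_graded_submodule Y pi x -> Jg x.
Proof.
case=> k; elim: k x => [|k IH] x [us [Us [HU ->]]].
  by rewrite big_ord0; exists (fun x => x = 0); split=> //; exact: good_zero.
rewrite big_ord_recl.
have [U' [gU' U'x]] : Jg (\sum_(i < k) us (lift ord0 i)).
  apply: IH; exists (fun i => us (lift ord0 i)), (fun i => Us (lift ord0 i)); split=> // i.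
case: (HU ord0) => /proper_good g0 u0.
eexists; split; first exact: (good_sum g0 gU').
by exists (us ord0), (\sum_(i < k) us (lift ord0 i)).
Qed.

Lemma Jg_J x : Jg x -> max_graded_submodule Y pi x.
Proof.
move=> [U [gU Ux]].
have [E|Hone] := eqVneq one 0.
  rewrite (all_zero E x); exists 0%N, (fun _ => 0), (fun _ _ => True).
  by split; [case|rewrite big_ord0].
exists 1%N, (fun _ => x), (fun _ => U); split; last by rewrite big_ord1.
by move=> _; split=> //; exact: good_proper.
Qed.

Lemma Jg_sub : subspace Jg.
Proof.
split; first by exists (fun x => x = 0); split=> //; exact: good_zero.
move=> a x y [U1 [g1 h1]] [U2 [g2 h2]].
exists (fun x => exists y z, U1 y /\ U2 z /\ x = y + z); split; first exact: good_sum.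
by exists (a *: x), y; split=> //; exact: subZ (g1.1) h1.
Qed.

Lemma binz0 x : binz x 0 = 1.
Proof. by case: x => n; rewrite /binz ?bin0 ?expr0 ?mul1r ?addn0 ?bin0. Qed.

Lemma skew0 U b w (m m' s : int) : good U -> U b -> pi m b = b -> pi m' w = w ->
  m + m' - s - 1 = 0 -> Y b s w = 0.
Proof.
move=> [HS [Hpi [HY HZ]]] Ub Hb Hw Hdeg.
have Hz : forall i : nat, Y w (s + i%:Z) b = 0.
  move=> i; have := Y_deg (s + i%:Z) Hw Hb.
  have -> : m' + m - (s + i%:Z) - 1 = - i%:Z by lia.
  case: i => [|i] Hd.
    by rewrite -Hd HZ //; apply: HY.
  by rewrite -Hd Hneg //; lia.
have B := @va_borcherds _ _ _ _ VAax w b one (-1) 0 s 1%N.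
have /B {B} : forall i : nat, (1 <= i)%N ->
   Y w (s + i%:Z) b = 0 /\ Y b (0 + i%:Z) one = 0 /\ Y w (-1 + i%:Z) one = 0.
  by move=> i Hi; split; [exact: Hz|split; apply: Yvac; lia].
rewrite !big_nat1 !binz0 Hz Y0l scaler0 Yvac // Y0r.
rewrite !addr0 !add0r ?subr0 Ycreate expr0 mul1r scale1r => /esym /eqP.
rewrite oppr_eq0 scaler_eq0 => /orP [|/eqP //].
by rewrite expf_eq0 oppr_eq0 oner_eq0 andbF.
Qed.

Lemma sub_pred_lin (f : V -> V) (T : V -> Prop) : lin_map f -> subspace T ->
  subspace (fun x => T (f x)).
Proof.
move=> Hf [T0 HT]; split; first by rewrite (lin0 Hf).
by move=> a x y Hx Hy; rewrite Hf; apply: HT.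
Qed.

Lemma sub_zero : subspace (fun x : V => x = 0).
Proof. exact: good_zero.1. Qed.

Definition Tsp U x := forall S : V -> Prop, subspace S ->
  (forall b s w, U b -> S (Y b s w)) -> S x.

Lemma Tsp_sub U : subspace (Tsp U).
Proof.
split; first by move=> S HS _; exact: sub0.
move=> a x y Hx Hy S HS HG; case: (HS) => _ H; apply: H; [exact: Hx|exact: Hy].
Qed.

Lemma Tsp_gen U b s w : U b -> Tsp U (Y b s w).
Proof. by move=> Ub S _ HG; apply: HG. Qed.

Lemma Tsp_ind U (S : V -> Prop) : subspace S -> (forall b s w, U b -> S (Y b s w)) ->
  forall x, Tsp U x -> S x.
Proof. by move=> HS HG x Hx; apply: Hx. Qed.

Lemma binz0n i : binz 0 i = (i == 0)%N%:Z.
Proof. by case: i. Qed.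

Lemma Tsp_good U : good U -> good (Tsp U).
Proof.
move=> gU; have [HS [Hpi [HY HZ]]] := gU.
split; first exact: Tsp_sub.
split.
  move=> n x; apply: (@Tsp_ind U (fun x => Tsp U (pi n x))).
    exact: sub_pred_lin (pi_lin n) (Tsp_sub U).
  move=> b s w Ub.
  apply: (@decomp (fun b => pi n (Y b s w)) (Tsp U) b).
  - exact: lin_comp (pi_lin n) (Yl_lin s w).
  - exact: Tsp_sub.
  move=> m; apply: (@decomp (fun w => pi n (Y (pi m b) s w)) (Tsp U) w).
  - exact: lin_comp (pi_lin n) (Yr_lin _ s).
  - exact: Tsp_sub.
  move=> m'; rewrite (pi_homog n (Y_deg s (pi_idem m b) (pi_idem m' w))).
  case: ifP => _; [apply: Tsp_gen; exact: Hpi|exact: (sub0 (Tsp_sub U))].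
split.
  move=> c t x; apply: (@Tsp_ind U (fun x => Tsp U (Y c t x))).
    exact: sub_pred_lin (Yr_lin c t) (Tsp_sub U).
  move=> b s w Ub.
  have [K1 HK1] := trunc c b 0.
  have [K2 HK2] := trunc b w s.
  have [K3 HK3] := trunc c w t.
  set K := maxn 1 (maxn K1 (maxn K2 K3)).
  have B := @va_borcherds _ _ _ _ VAax c b w t s 0 K.
  have /B {B} : forall i : nat, (K <= i)%N ->
      Y c (0 + i%:Z) b = 0 /\ Y b (s + i%:Z) w = 0 /\ Y c (t + i%:Z) w = 0.
    move=> i Hi; split; first by apply: HK1; rewrite /K in Hi; lia.
    by split; [apply: HK2|apply: HK3]; rewrite /K in Hi; lia.
  move=> E.
  rewrite [X in _ = X](@big_ltn _ _ _ 0 K) in E; last by rewrite /K; lia.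
  rewrite [X in _ = _ + X]big_nat_cond [X in _ = _ + X]big1 ?addr0 in E; last first.
    move=> i /andP [/andP [Hi _] _]; rewrite binz0n.
    by case: i Hi => // i _; rewrite mulr0 scale0r.
  move: E; rewrite binz0n expr0 mul1r !scale1r => E.
  have -> : Y c t (Y b s w) =
     \sum_(0 <= i < K) ((binz t i)%:~R : F) *: Y (Y c (0 + i%:Z) b) (t + s - i%:Z) w
     + Y b s (Y c t w) by rewrite E subrK.
  apply: (subD (Tsp_sub U)); last by apply: Tsp_gen.
  apply: (sub_sum (Tsp_sub U)) => i _.
  by apply: (subZ _ (Tsp_sub U)); apply: Tsp_gen; exact: HY.
move=> x; apply: (@Tsp_ind U (fun x => pi 0 x = 0)).
  exact: sub_pred_lin (pi_lin 0) sub_zero.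
move=> b s w Ub.
apply: (@decomp (fun b => pi 0 (Y b s w)) (fun x => x = 0) b).
- exact: lin_comp (pi_lin 0) (Yl_lin s w).
- exact: sub_zero.
move=> m; apply: (@decomp (fun w => pi 0 (Y (pi m b) s w)) (fun x => x = 0) w).
- exact: lin_comp (pi_lin 0) (Yr_lin _ s).
- exact: sub_zero.
move=> m'; rewrite (pi_homog 0 (Y_deg s (pi_idem m b) (pi_idem m' w))).
case: ifP => // /eqP Hd.
apply: (skew0 gU (Hpi m b Ub) (pi_idem m b) (pi_idem m' w)); lia.
Qed.

Lemma sub_sum_nat (S : V -> Prop) m n (g : nat -> V) : subspace S ->
  (forall i, (m <= i < n)%N -> S (g i)) -> S (\sum_(m <= i < n) g i).
Proof.
by move=> HS Hg; rewrite big_nat_cond; apply: (sub_sum HS) => i /andP [Hi _]; apply: Hg.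
Qed.

Lemma Jg_ideal : VA_ideal Y Jg.
Proof.
split; first exact: Jg_sub.
move=> u a r [U [gU Ua]]; split.
  by exists U; split=> //; exact: gU.2.2.1 u r a Ua.
by exists (Tsp U); split; [exact: Tsp_good|exact: Tsp_gen].
Qed.

Lemma Jg_Lm1 k a : Jg a -> Jg (Lm1 k a).
Proof.
move=> [U [gU Ua]]; exists (Tsp U); split; first exact: Tsp_good.
by rewrite Lm1E; exact: Tsp_gen.
Qed.

Lemma Jg_L0 k a : Jg a -> Jg (L0 k a).
Proof.
move=> [U [gU Ua]]; exists U; split=> //; have [HS [Hpi _]] := gU.
apply: (@decomp (L0 k) U a (L0_lin k) HS) => n.
rewrite (L0_hom k (pi_idem n a)); apply: (subZ _ HS); exact: Hpi.
Qed.

Definition Wsp U x := forall S : V -> Prop, subspace S ->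
  (forall j y, U y -> S (L1 j y)) -> S x.

Lemma Wsp_sub U : subspace (Wsp U).
Proof.
split; first by move=> S HS _; exact: sub0.
move=> a x y Hx Hy S HS HG; case: (HS) => _ H; apply: H; [exact: Hx|exact: Hy].
Qed.

Lemma Wsp_gen U j y : U y -> Wsp U (L1 j y).
Proof. by move=> Uy S _ HG; apply: HG. Qed.

Lemma Wsp_U U y : U y -> Wsp U y.
Proof. by move=> Uy; rewrite -(L1_0 y); apply: Wsp_gen. Qed.

Lemma Wsp_ind U (S : V -> Prop) : subspace S -> (forall j y, U y -> S (L1 j y)) ->
  forall x, Wsp U x -> S x.
Proof. by move=> HS HG x Hx; apply: Hx. Qed.

Lemma Wsp_L1 U a x : Wsp U x -> Wsp U (L1 a x).
Proof.
apply: (@Wsp_ind U (fun x => Wsp U (L1 a x))).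
  exact: sub_pred_lin (L1_lin a) (Wsp_sub U).
move=> j y Uy; rewrite L1_L1; apply: (subZ _ (Wsp_sub U)); exact: Wsp_gen.
Qed.


Lemma Wsp_good U (HL1 : forall (n : nat) (v : V), (0 < n)%N -> pi n%:Z v = v -> L1 n v = 0) :
  good U -> good (Wsp U).
Proof.
move=> gU; have [HS [Hpi [HY HZ]]] := gU.
split; first exact: Wsp_sub.
split.
  move=> n x; apply: (@Wsp_ind U (fun x => Wsp U (pi n x))).
    exact: sub_pred_lin (pi_lin n) (Wsp_sub U).
  move=> j y Uy.
  apply: (@decomp (fun y => pi n (L1 j y)) (Wsp U) y).
  - exact: lin_comp (pi_lin n) (L1_lin j).
  - exact: Wsp_sub.
  move=> m; rewrite (pi_homog n (L1_deg j (pi_idem m y))).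
  case: ifP => _; [apply: Wsp_gen; exact: Hpi|exact: (sub0 (Wsp_sub U))].
split.
  have claim : forall k y, U y -> forall v r, Wsp U (Y v r (L1 k y)).
    elim/ltn_ind => k IH y Uy v r.
    apply: (@decomp (fun v => Y v r (L1 k y)) (Wsp U) v (Yl_lin r _) (Wsp_sub U)) => d.
    have E := @conjF d r k (pi d v) y (pi_idem d v).
    rewrite big_ltn // subn0 L1_0 in E.
    move: E; set X := Y (pi d v) r (L1 k y).
    set rest := \sum_(1 <= a < k.+1) _; set R := \sum_(0 <= i < k.+1) _ => E.
    have -> : X = (-1) ^+ k *: (R - rest).
      by rewrite -E addrK scalerA -exprMn mulrNN mulr1 expr1n scale1r.
    apply: (subZ _ (Wsp_sub U)); apply: (subB (Wsp_sub U)).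
      apply: (sub_sum_nat (Wsp_sub U)) => i _; apply: (subZ _ (Wsp_sub U)).
      by apply: Wsp_U; apply: HY.
    apply: (sub_sum_nat (Wsp_sub U)) => i /andP [Hi1 Hi2]; apply: (subZ _ (Wsp_sub U)).
    by apply: Wsp_L1; apply: IH => //; lia.
  move=> u r x; apply: (@Wsp_ind U (fun x => Wsp U (Y u r x))).
    exact: sub_pred_lin (Yr_lin u r) (Wsp_sub U).
  by move=> j y Uy; apply: claim.
move=> x; apply: (@Wsp_ind U (fun x => pi 0 x = 0)).
  exact: sub_pred_lin (pi_lin 0) sub_zero.
move=> j y Uy.
apply: (@decomp (fun y => pi 0 (L1 j y)) (fun x => x = 0) y).
- exact: lin_comp (pi_lin 0) (L1_lin j).
- exact: sub_zero.
move=> m; rewrite (pi_homog 0 (L1_deg j (pi_idem m y))).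
case: ifP => // /eqP Hd.
case: j Hd => [|j] Hd.
  have -> : m = 0 by lia.
  by rewrite L1_0 -{1}(pi_idem 0 y); apply: HZ; apply: Hpi.
apply: HL1 => //.
have -> : m = j.+1%:Z by lia.
exact: pi_idem.
Qed.

Lemma Jg_L1 (HL1 : forall (n : nat) (v : V), (0 < n)%N -> pi n%:Z v = v -> L1 n v = 0) k a :
  Jg a -> Jg (L1 k a).
Proof.
move=> [U [gU Ua]]; exists (Wsp U); split; [exact: Wsp_good|exact: Wsp_gen].
Qed.

Lemma main_sec : VA_ideal Y (max_graded_submodule Y pi) /\
  ((forall (n : nat) (v : V), (0 < n)%N -> pi n%:Z v = v -> L1 n v = 0) ->
   H_submodule Lm1 L0 L1 (max_graded_submodule Y pi)).
Proof.
have E : forall x, max_graded_submodule Y pi x <-> Jg x.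
  by move=> x; split; [apply: J_Jg|apply: Jg_J].
have Hsub : subspace (max_graded_submodule Y pi).
  case: Jg_sub => h0 h; split; first by apply/E.
  by move=> a x y /E hx /E hy; apply/E; exact: h.
split.
  split=> // u a r /E Ha; case: (Jg_ideal.2 u a r Ha) => h1 h2.
  by split; apply/E.
move=> HL1; split=> // k a /E Ha; split; [|split]; apply/E.
- exact: Jg_Lm1.
- exact: Jg_L0.
- exact: Jg_L1.
Qed.

End VA.

Unset Implicit Arguments.

Theorem lemma4p12 (p : nat) (F : closedFieldType) (V : lmodType F) (one : V)
    (Y : V -> int -> V -> V) (pi : int -> V -> V) (Lm1 L0 L1 : nat -> V -> V) :
  prime p -> odd p -> p \in [pchar F] ->
  H_module_VA one Y pi Lm1 L0 L1 ->
  (forall (n : int) (v : V), n < 0 -> pi n v = 0) ->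
  (forall v : V, pi 0 v = v -> exists c : F, v = c *: one) ->
  VA_ideal Y (max_graded_submodule Y pi) /\
  ((forall (n : nat) (v : V), (0 < n)%N -> pi n%:Z v = v -> L1 n v = 0) ->
   H_submodule Lm1 L0 L1 (max_graded_submodule Y pi)).
Proof.
move=> _ _ _ HV Hn H0; exact: (main_sec HV Hn H0).
Qed.
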